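(* Let $M$ be a circulant matrix over $\mathbb{Z}_4+u\mathbb{Z}_4$ of order $n-1$, and let $\alpha,\beta,\gamma\in\mathbb{Z}_4+u\mathbb{Z}_4$ with $\gamma=\pm\beta$. Let $G=[I_n\,|\,B]$, where $B$ is the $n\times n$ matrix whose first row is $(\alpha,\beta,\beta,\dots,\beta)$ and whose remaining rows are $(\gamma\,|\,\text{row } i \text{ of } M)$ for $i=1,\dots,n-1$, i.e. $B=\begin{pmatrix}\alpha & \beta\cdots\beta\\ \gamma\mathbf{1}^T & M\end{pmatrix}$ with $\mathbf{1}$ the all-ones vector of length $n-1$. Then $G$ generates a formally self-dual code of length $2n$ over $\mathbb{Z}_4+u\mathbb{Z}_4$ whose Gray image under $\phi$ is a formally self-dual code over $\mathbb{Z}_4$ of length $4n$.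
   Context: $\mathbb{Z}_4+u\mathbb{Z}_4$ is the commutative ring of characteristic $4$ with $u^2=0$. A linear code over a ring $R$ is an $R$-submodule of $R^N$; duals are taken with respect to the Euclidean inner product $\sum_i x_iy_i$ in $R$. Lee weight on $\mathbb{Z}_4$: $0,1,2,1$ for $0,1,2,3$; on $\mathbb{Z}_4+u\mathbb{Z}_4$: $w_L(a+ub)=w_L(b)+w_L(a+b)$; extended additively to vectors. A linear code (over either ring) is formally self-dual if it has the same Lee weight enumerator as its dual. The Gray map $\phi:(\mathbb{Z}_4+u\mathbb{Z}_4)^{N}\to\mathbb{Z}_4^{2N}$ is $\phi(\overline{a}+u\overline{b})=(\overline{b},\overline{a}+\overline{b})$ for $\overline{a},\overline{b}\in\mathbb{Z}_4^N$. A circulant matrix is one in which each row is the cyclic right shift of the previous row. *)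

(* Defs.v *)
From mathcomp Require Import all_boot all_order all_algebra.
Set Implicit Arguments. Unset Strict Implicit. Unset Printing Implicit Defensive.
Import GRing.Theory.
Local Open Scope ring_scope.

(* The ring Z4 + u Z4 (u^2 = 0): the pair (a, b) represents a + u b. *)
Definition R4u : finType := ('Z_4 * 'Z_4)%type.
Definition radd (x y : R4u) : R4u := (x.1 + y.1, x.2 + y.2).
Definition ropp (x : R4u) : R4u := (- x.1, - x.2).
Definition rmul (x y : R4u) : R4u := (x.1 * y.1, x.1 * y.2 + x.2 * y.1).
Definition rzero : R4u := (0, 0).
Definition rone : R4u := (1, 0).

Definition leeZ4 (a : 'Z_4) : nat :=
  match val a with 0 => 0 | 1 => 1 | 2 => 2 | _ => 1 end%N.
Definition leeR (x : R4u) : nat := addn (leeZ4 x.2) (leeZ4 (x.1 + x.2)%R).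
Definition wtR N (v : {ffun 'I_N -> R4u}) : nat := (\sum_(i < N) leeR (v i))%N.
Definition wtZ N (v : {ffun 'I_N -> 'Z_4}) : nat := (\sum_(i < N) leeZ4 (v i))%N.

Definition ipR N (x y : {ffun 'I_N -> R4u}) : R4u :=
  \big[radd/rzero]_(i < N) rmul (x i) (y i).
Definition ipZ N (x y : {ffun 'I_N -> 'Z_4}) : 'Z_4 := \sum_(i < N) x i * y i.
Definition dualR N (C : {set {ffun 'I_N -> R4u}}) : {set {ffun 'I_N -> R4u}} :=
  [set y | [forall x in C, ipR x y == rzero]].
Definition dualZ N (C : {set {ffun 'I_N -> 'Z_4}}) : {set {ffun 'I_N -> 'Z_4}} :=
  [set y | [forall x in C, ipZ x y == 0]].

Definition fsdR N (C : {set {ffun 'I_N -> R4u}}) : Prop :=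
  forall w : nat, #|[set c in C | wtR c == w]| = #|[set c in dualR C | wtR c == w]|.
Definition fsdZ N (C : {set {ffun 'I_N -> 'Z_4}}) : Prop :=
  forall w : nat, #|[set c in C | wtZ c == w]| = #|[set c in dualZ C | wtZ c == w]|.

Definition codeR k N (G : 'M[R4u]_(k, N)) : {set {ffun 'I_N -> R4u}} :=
  [set v : {ffun 'I_N -> R4u} | [exists x : {ffun 'I_k -> R4u},
     [forall j, v j == \big[radd/rzero]_(i < k) rmul (x i) (G i j)]]].

Definition gray N (v : {ffun 'I_N -> R4u}) : {ffun 'I_(N + N) -> 'Z_4} :=
  [ffun k => match split k with
             | inl i => (v i).2
             | inr i => (v i).1 + (v i).2 end].

Definition circulant m (M : 'M[R4u]_m) : Prop :=
  forall i j : 'I_m, (i.+1 < m)%N -> M (ordS i) (ordS j) = M i j.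

Definition idmxR n : 'M[R4u]_n := \matrix_(i < n, j < n) if i == j then rone else rzero.

Definition Bmat m (M : 'M[R4u]_m) (alpha beta gamma : R4u) : 'M[R4u]_(1 + m) :=
  block_mx (const_mx alpha : 'M_(1, 1)) (const_mx beta : 'M_(1, m))
           (const_mx gamma : 'M_(m, 1)) M.

Definition Gmat m (M : 'M[R4u]_m) (alpha beta gamma : R4u)
  : 'M[R4u]_(1 + m, (1 + m) + (1 + m)) :=
  row_mx (idmxR (1 + m)) (Bmat M alpha beta gamma).

(* Main.v *)
From HB Require Import structures.
Require Import Defs.
From mathcomp Require Import all_boot all_order all_algebra.
From mathcomp Require Import ring.
Set Warnings "-notation-overridden,-ambiguous-paths,-redundant-canonical-projection".
Set Implicit Arguments. Unset Strict Implicit. Unset Printing Implicit Defensive.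
Import GRing.Theory.
Local Open Scope ring_scope.


Definition RR : Type := ('Z_4 * 'Z_4)%type.
HB.instance Definition _ := Finite.on RR.
HB.instance Definition _ := GRing.Zmodule.on RR.

Lemma RR_mulA : associative (rmul : RR -> RR -> RR).
Proof. move=> [a b] [c d] [e f]; rewrite /rmul /=; congr pair; rewrite /=; ring. Qed.
Lemma RR_mulC : commutative (rmul : RR -> RR -> RR).
Proof. move=> [a b] [c d]; rewrite /rmul /=; congr pair; rewrite /=; ring. Qed.
Lemma RR_mul1 : left_id (rone : RR) rmul.
Proof. move=> [a b]; rewrite /rmul /rone /=; congr pair; rewrite /=; ring. Qed.
Lemma RR_mulD : left_distributive (rmul : RR -> RR -> RR) +%R.
Proof. move=> [a b] [c d] [e f]; rewrite /rmul /=; congr pair; rewrite /=; ring. Qed.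
Lemma RR_one : (rone : RR) != 0.
Proof. by []. Qed.
HB.instance Definition _ := GRing.Zmodule_isComNzRing.Build RR RR_mulA RR_mulC RR_mul1 RR_mulD RR_one.

Lemma raddE (x y : RR) : radd x y = x + y. Proof. by []. Qed.
Lemma rmulE (x y : RR) : rmul x y = x * y. Proof. by []. Qed.
Lemma rzeroE : (rzero : RR) = 0. Proof. by []. Qed.
Lemma roppE (x : RR) : ropp x = - x. Proof. by []. Qed.
Lemma bigRE I (r : seq I) (P : pred I) (F : I -> RR) :
  \big[radd/rzero]_(i <- r | P i) F i = \sum_(i <- r | P i) F i.
Proof. by elim: r => [|x r IH]; rewrite ?big_nil ?big_cons // IH; case: (P x). Qed.
Lemma ordS_add m' (x : 'I_m'.+1) : ordS x = x + Zp1.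
Proof. by apply/val_inj => /=; rewrite modnDmr addn1. Qed.

Lemma circ0 m' (M : 'M[R4u]_m'.+1) : circulant M ->
  forall i j, M i j = M 0 (j - i).
Proof.
move=> hM i j; move: {2}(val i) (erefl (val i)) => k; elim: k i j => [|k IH] i j hi.
  have -> : i = 0 by apply/val_inj.
  by rewrite subr0.
have hk : (k < m'.+1)%N by apply: ltn_trans (ltn_ord i); rewrite hi.
have -> : i = ordS (Ordinal hk).
  by apply/val_inj => /=; rewrite hi modn_small // -hi ltn_ord.
have hj : ordS (j - Zp1) = j by rewrite ordS_add subrK.
rewrite -{1}hj hM /=; last by rewrite -hi ltn_ord.
rewrite IH //; congr (M 0 _); rewrite ordS_add opprD addrA addrAC. by [].
Qed.

Lemma circ_rho m (M : 'M[R4u]_m) : circulant M ->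
  exists rho : 'I_m -> 'I_m, involutive rho /\ forall a b, M b (rho a) = M a (rho b).
Proof.
case: m M => [|m'] M hM; first by exists id; split => // -[].
exists (fun a => - a); split; first exact: opprK.
move=> a b; rewrite (circ0 hM b) (circ0 hM a); congr (M 0 _); by rewrite addrC.
Qed.

Definition mulv n (t : {ffun 'I_n -> R4u}) (B : 'M[R4u]_n) : {ffun 'I_n -> R4u} :=
  [ffun j => \sum_i (t i : RR) * (B i j : RR)].
Definition mulm n (B : 'M[R4u]_n) (y : {ffun 'I_n -> R4u}) : {ffun 'I_n -> R4u} :=
  [ffun i => \sum_j (B i j : RR) * (y j : RR)].
Definition enc n (B : 'M[R4u]_n) (t : {ffun 'I_n -> R4u}) : {ffun 'I_(n + n) -> R4u} :=
  [ffun k => match split k with inl i => t i | inr j => mulv t B j end].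
Definition dec n (B : 'M[R4u]_n) (y : {ffun 'I_n -> R4u}) : {ffun 'I_(n + n) -> R4u} :=
  [ffun k => match split k with inl i => (- (mulm B y i : RR) : RR) | inr j => y j end].

Lemma splitL m n (i : 'I_m) : split (lshift n i) = inl _ i.
Proof. exact: (unsplitK (inl _ i)). Qed.
Lemma splitR m n (i : 'I_n) : split (rshift m i) = inr _ i.
Proof. exact: (unsplitK (inr _ i)). Qed.

Lemma enc_l n B t (i : 'I_n) : enc B t (lshift n i) = t i.
Proof. by rewrite ffunE splitL. Qed.
Lemma enc_r n B t (i : 'I_n) : enc B t (rshift n i) = mulv t B i.
Proof. by rewrite ffunE splitR. Qed.
Lemma dec_l n B y (i : 'I_n) : dec B y (lshift n i) = (- (mulm B y i : RR) : RR).
Proof. by rewrite ffunE splitL. Qed.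
Lemma dec_r n B y (i : 'I_n) : dec B y (rshift n i) = y i.
Proof. by rewrite ffunE splitR. Qed.

Lemma sum_delta n (x : {ffun 'I_n -> R4u}) j :
  \sum_(i < n) (x i : RR) * ((if i == j then rone else rzero) : RR) = x j.
Proof.
rewrite (bigD1 j) //= eqxx big1 ?addr0; first by rewrite -[rone]/(1 : RR) mulr1.
by move=> i /negbTE ->; rewrite -[rzero]/(0 : RR) mulr0.
Qed.

Lemma codeR_enc n (B : 'M[R4u]_n) :
  codeR (row_mx (idmxR n) B) = [set enc B t | t in [set: {ffun 'I_n -> R4u}]].
Proof.
apply/setP => v; rewrite inE; apply/existsP/imsetP.
  case=> x /forallP hx; exists x; first by rewrite inE.
  apply/ffunP => k; rewrite (eqP (hx k)) bigRE -(splitK k).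
  case: (split k) => [i|j] /=.
    rewrite enc_l; under eq_bigr do rewrite rmulE row_mxEl mxE.
    exact: sum_delta.
  by rewrite enc_r ffunE; apply: eq_bigr => i _; rewrite rmulE row_mxEr.
case=> t _ ->; exists t; apply/forallP => k; apply/eqP.
rewrite bigRE -(splitK k); case: (split k) => [i|j] /=.
  rewrite enc_l; under eq_bigr do rewrite rmulE row_mxEl mxE.
  by rewrite sum_delta.
by rewrite enc_r ffunE; apply: eq_bigr => i _; rewrite rmulE row_mxEr.
Qed.

Definition rpart n (y : {ffun 'I_(n + n) -> R4u}) : {ffun 'I_n -> R4u} :=
  [ffun j => y (rshift n j)].

Lemma ipRE N (x y : {ffun 'I_N -> R4u}) : ipR x y = \sum_(k < N) (x k : RR) * (y k : RR).
Proof. by rewrite /ipR bigRE. Qed.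

Lemma ip_enc n (B : 'M[R4u]_n) t (y : {ffun 'I_(n + n) -> R4u}) :
  ipR (enc B t) y = \sum_(i < n) (t i : RR) * ((y (lshift n i) : RR) + (mulm B (rpart y) i : RR)).
Proof.
rewrite ipRE big_split_ord /=.
under eq_bigr do rewrite enc_l.
under [X in _ + X = _]eq_bigr do rewrite enc_r ffunE mulr_suml.
rewrite exchange_big /= -big_split /=; apply: eq_bigr => i _.
rewrite mulrDr ffunE mulr_sumr; congr (_ + _); apply: eq_bigr => j _.
by rewrite ffunE mulrA.
Qed.

Definition delta n (i : 'I_n) : {ffun 'I_n -> R4u} := [ffun k => if k == i then (1 : RR) else 0].

Lemma dualR_dec n (B : 'M[R4u]_n) :
  dualR [set enc B t | t in [set: {ffun 'I_n -> R4u}]] =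
  [set dec B y | y in [set: {ffun 'I_n -> R4u}]].
Proof.
apply/setP => y; rewrite inE; apply/forallP/imsetP.
  move=> hy; exists (rpart y); first by rewrite inE.
  apply/ffunP => k; rewrite -(splitK k); case: (split k) => [i|j] /=; last first.
    by rewrite dec_r ffunE.
  rewrite dec_l; have := hy (enc B (delta i)); rewrite imset_f ?inE //=. rewrite ip_enc.
  rewrite (bigD1 i) //= big1 ?ffunE ?eqxx ?mul1r ?addr0.
    by move/eqP; rewrite -[rzero]/(0 : RR) => /eqP; rewrite addr_eq0 => /eqP.
  by move=> j /negbTE hj; rewrite ffunE hj mul0r.
case=> s _ -> x; apply/implyP => /imsetP [t _ ->]; apply/eqP.
rewrite ip_enc big1 // => i _; rewrite dec_l.
have -> : rpart (dec B s) = s by apply/ffunP => j; rewrite ffunE dec_r.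
by rewrite addNr mulr0.
Qed.

Lemma leeZ4_opp (a : 'Z_4) : leeZ4 (- a) = leeZ4 a.
Proof. by case: a => [[|[|[|[|k]]]] hk]. Qed.

Lemma leeR_opp (x : RR) : leeR (- x) = leeR x.
Proof.
case: x => a b; rewrite /leeR /=.
by rewrite -opprD !leeZ4_opp.
Qed.

Lemma wtR_enc n (B : 'M[R4u]_n) t : wtR (enc B t) = (wtR t + wtR (mulv t B))%N.
Proof.
rewrite /wtR big_split_ord /=; congr (_ + _)%N; apply: eq_bigr => i _.
  by rewrite enc_l.
by rewrite enc_r.
Qed.

Lemma wtR_dec n (B : 'M[R4u]_n) y : wtR (dec B y) = (wtR (mulm B y) + wtR y)%N.
Proof.
rewrite /wtR big_split_ord /=; congr (_ + _)%N; apply: eq_bigr => i _.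
  by rewrite dec_l leeR_opp.
by rewrite dec_r.
Qed.

Lemma card_wt (A B : finType) (X : {set A}) (Y : {set B}) (f : A -> B)
  (wa : A -> nat) (wb : B -> nat) (w : nat) :
  injective f -> f @: X = Y -> (forall a, wb (f a) = wa a) ->
  #|[set a in X | wa a == w]| = #|[set b in Y | wb b == w]|.
Proof.
move=> finj hY hw; rewrite -(card_imset _ finj); apply: eq_card => b.
rewrite [in RHS]inE -hY; apply/imsetP/andP.
  by case=> a; rewrite inE => /andP [ha /eqP <-] ->; rewrite imset_f // hw.
case=> /imsetP [a ha ->]; rewrite hw => hwa; exists a => //; by rewrite inE ha hwa.
Qed.

Definition piI m (rho : 'I_m -> 'I_m) (j : 'I_(1 + m)) : 'I_(1 + m) :=
  match split j with inl _ => j | inr a => rshift 1 (rho a) end.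
Definition sgI m (eps : RR) (j : 'I_(1 + m)) : RR :=
  match split j with inl _ => eps | inr _ => 1 end.
Definition sigv m (rho : 'I_m -> 'I_m) (eps : RR) (t : {ffun 'I_(1 + m) -> R4u})
  : {ffun 'I_(1 + m) -> R4u} := [ffun j => sgI eps j * (t (piI rho j) : RR)].

Lemma piI_inv m (rho : 'I_m -> 'I_m) : involutive rho -> involutive (piI rho).
Proof.
move=> hr j; rewrite /piI -(splitK j); case: (split j) => [i|a] /=.
  by rewrite splitL /= ?splitL.
by rewrite splitR /= ?splitR hr.
Qed.

Lemma sgI_pi m (rho : 'I_m -> 'I_m) eps j : sgI eps (piI rho j) = sgI eps j.
Proof.
rewrite /sgI /piI -(splitK j); by case: (split j) => [i|a] /=; rewrite ?splitL ?splitR /= ?splitL ?splitR.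
Qed.

Lemma sgI_sq m eps (j : 'I_(1 + m)) : eps * eps = 1 -> sgI eps j * sgI eps j = 1.
Proof. by rewrite /sgI; case: (split j) => // _; rewrite mulr1. Qed.

Lemma sigvK m (rho : 'I_m -> 'I_m) eps : involutive rho -> eps * eps = 1 ->
  involutive (sigv rho eps).
Proof.
move=> hr he t; apply/ffunP => j; rewrite !ffunE sgI_pi piI_inv // mulrA.
by rewrite sgI_sq // mul1r.
Qed.

Lemma Bkey m (M : 'M[R4u]_m) (alpha beta gamma : R4u) (rho : 'I_m -> 'I_m) (eps : RR) :
  (forall a b, M b (rho a) = M a (rho b)) -> eps * eps = 1 -> (gamma : RR) = eps * beta ->
  forall i l, (Bmat M alpha beta gamma i (piI rho l) : RR) * sgI eps l =
    sgI eps i * (Bmat M alpha beta gamma l (piI rho i) : RR).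
Proof.
move=> hM he hg i l; rewrite /Bmat /sgI /piI -(splitK i) -(splitK l).
case: (split i) => [i0|b]; case: (split l) => [l0|a] /=;
  rewrite ?splitL ?splitR /=.
- by rewrite !block_mxEul !mxE mulrC.
- by rewrite block_mxEur block_mxEdl !mxE hg mulrA he mul1r mulr1.
- by rewrite block_mxEdl block_mxEur !mxE hg mulrAC he !mul1r.
- by rewrite !block_mxEdr mulr1 mul1r hM.
Qed.

Lemma mulm_sig m (B : 'M[R4u]_(1 + m)) (rho : 'I_m -> 'I_m) (eps : RR) t i :
  involutive rho ->
  (forall i l, (B i (piI rho l) : RR) * sgI eps l = sgI eps i * (B l (piI rho i) : RR)) ->
  (mulm B (sigv rho eps t) i : RR) = sgI eps i * (mulv t B (piI rho i) : RR).
Proof.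
move=> hr hk; rewrite !ffunE (reindex_inj (inv_inj (piI_inv hr))) /= mulr_sumr.
apply: eq_bigr => l _; rewrite ffunE sgI_pi piI_inv // mulrA hk -mulrA.
by rewrite [(B l _ : RR) * _]mulrC.
Qed.

Lemma leeR_sg m (eps : RR) (j : 'I_(1 + m)) (x : RR) : eps = 1 \/ eps = -1 ->
  leeR (sgI eps j * x) = leeR x.
Proof.
move=> he; rewrite /sgI; case: (split j) => _; last by rewrite mul1r.
by case: he => ->; rewrite ?mul1r // mulN1r leeR_opp.
Qed.

Lemma wt_sig m (rho : 'I_m -> 'I_m) (eps : RR) t : involutive rho -> eps = 1 \/ eps = -1 ->
  wtR (sigv rho eps t) = wtR t.
Proof.
move=> hr he; rewrite /wtR (reindex_inj (inv_inj (piI_inv hr))) /=.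
by apply: eq_bigr => j _; rewrite ffunE leeR_sg // piI_inv.
Qed.

Lemma wt_mulm_sig m (B : 'M[R4u]_(1 + m)) (rho : 'I_m -> 'I_m) (eps : RR) t :
  involutive rho -> eps = 1 \/ eps = -1 ->
  (forall i l, (B i (piI rho l) : RR) * sgI eps l = sgI eps i * (B l (piI rho i) : RR)) ->
  wtR (mulm B (sigv rho eps t)) = wtR (mulv t B).
Proof.
move=> hr he hk; rewrite /wtR (reindex_inj (inv_inj (piI_inv hr))) /=.
apply: eq_bigr => i _; rewrite mulm_sig // leeR_sg // piI_inv //.
Qed.

Lemma enc_inj n (B : 'M[R4u]_n) : injective (enc B).
Proof. by move=> t1 t2 h; apply/ffunP => i; rewrite -(enc_l B t1) h enc_l. Qed.
Lemma dec_inj n (B : 'M[R4u]_n) : injective (dec B).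
Proof. by move=> t1 t2 h; apply/ffunP => i; rewrite -(dec_r B t1) h dec_r. Qed.

Lemma eps_ex (beta gamma : R4u) : (gamma = beta \/ gamma = ropp beta) ->
  exists eps : RR, [/\ eps = 1 \/ eps = -1, eps * eps = 1 & (gamma : RR) = eps * beta].
Proof.
case=> ->; [exists 1 | exists (-1)]; split; rewrite ?mul1r ?mulN1r ?opprK ?mulr1 //; by [left|right].
Qed.

Lemma fsdR_part m (M : 'M[R4u]_m) (alpha beta gamma : R4u) :
  circulant M -> (gamma = beta \/ gamma = ropp beta) ->
  fsdR (codeR (Gmat M alpha beta gamma)).
Proof.
move=> hc hg w; have [rho [hr hM]] := circ_rho hc.
have [eps [he1 he2 hge]] := eps_ex hg.
have hk := Bkey alpha hM he2 hge.
rewrite /Gmat codeR_enc dualR_dec.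
transitivity #|[set t in [set: {ffun 'I_(1 + m) -> R4u}] | wtR (enc (Bmat M alpha beta gamma) t) == w]|.
  by symmetry; apply: card_wt => //; exact: enc_inj.
apply: (card_wt (f := fun t => dec (Bmat M alpha beta gamma) (sigv rho eps t))).
- by move=> t1 t2 /dec_inj; apply: inv_inj; exact: sigvK.
- apply/setP => y; apply/imsetP/imsetP => [[t _ ->]|[s _ ->]].
    by exists (sigv rho eps t); rewrite ?inE.
  by exists (sigv rho eps s); rewrite ?inE // sigvK.
- by move=> t; rewrite wtR_dec wt_mulm_sig // wt_sig // wtR_enc addnC.
Qed.

Definition tau (x : RR) : RR := (x.1 + x.2 + x.2, - x.2).
Lemma tauK : involutive tau.
Proof. by case=> a b; rewrite /tau /=; congr pair; ring. Qed.
Lemma leeR_tau x : leeR (tau x) = leeR x.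
Proof. by case: x => a b; rewrite /leeR /tau /= addrK leeZ4_opp. Qed.

Definition mapt N (y : {ffun 'I_N -> R4u}) : {ffun 'I_N -> R4u} := [ffun i => tau (y i)].
Lemma maptK N : involutive (@mapt N).
Proof. by move=> y; apply/ffunP => i; rewrite !ffunE tauK. Qed.
Lemma wt_mapt N (y : {ffun 'I_N -> R4u}) : wtR (mapt y) = wtR y.
Proof. by apply: eq_bigr => i _; rewrite ffunE leeR_tau. Qed.

Definition ginv N (z : {ffun 'I_(N + N) -> 'Z_4}) : {ffun 'I_N -> R4u} :=
  [ffun i => (z (rshift N i) - z (lshift N i), z (lshift N i))].

Lemma gray_l N (v : {ffun 'I_N -> R4u}) i : gray v (lshift N i) = (v i).2.
Proof. by rewrite ffunE splitL. Qed.
Lemma gray_r N (v : {ffun 'I_N -> R4u}) i : gray v (rshift N i) = (v i).1 + (v i).2.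
Proof. by rewrite ffunE splitR. Qed.

Lemma grayK N : cancel (@gray N) (@ginv N).
Proof.
move=> v; apply/ffunP => i; rewrite ffunE gray_l gray_r addrK.
by case: (v i).
Qed.
Lemma ginvK N : cancel (@ginv N) (@gray N).
Proof.
move=> z; apply/ffunP => k; rewrite -(splitK k); case: (split k) => [i|i] /=.
  by rewrite gray_l ffunE.
by rewrite gray_r ffunE /= subrK.
Qed.

Lemma wt_gray N (v : {ffun 'I_N -> R4u}) : wtZ (gray v) = wtR v.
Proof.
rewrite /wtZ /wtR big_split_ord /= -big_split /=; apply: eq_bigr => i _.
by rewrite gray_l gray_r.
Qed.

Definition fZ (x : RR) : 'Z_4 := x.1 + x.2.
Lemma fZ_sum I (r : seq I) (F : I -> RR) : fZ (\sum_(i <- r) F i) = \sum_(i <- r) fZ (F i).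
Proof.
elim: r => [|x r IH]; first by rewrite !big_nil /fZ /= addr0.
rewrite !big_cons -IH /fZ /=; ring.
Qed.

Lemma ipZ_gray N (v : {ffun 'I_N -> R4u}) z :
  ipZ (gray v) z = fZ (ipR v (mapt (ginv z))).
Proof.
rewrite /ipZ ipRE fZ_sum big_split_ord /= -big_split /=; apply: eq_bigr => i _.
rewrite gray_l gray_r !ffunE -rmulE /rmul /fZ /tau /=.
case: (v i) => a b /=; ring.
Qed.

Definition scalev N (c : RR) (v : {ffun 'I_N -> R4u}) : {ffun 'I_N -> R4u} :=
  [ffun k => c * (v k : RR)].
Lemma ipR_scale N c (v y : {ffun 'I_N -> R4u}) : (ipR (scalev c v) y : RR) = c * ipR v y.
Proof. by rewrite !ipRE mulr_sumr; apply: eq_bigr => i _; rewrite ffunE mulrA. Qed.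

Lemma dualZ_gray N (C : {set {ffun 'I_N -> R4u}}) :
  (forall v, v \in C -> scalev (0, 1) v \in C) ->
  forall z, (z \in dualZ [set gray v | v in C]) = (mapt (ginv z) \in dualR C).
Proof.
move=> hC z; rewrite !inE; apply/forallP/forallP => h x; apply/implyP => hx.
  have := h (gray x); rewrite imset_f //= ipZ_gray => /eqP h1.
  have := h (gray (scalev (0, 1) x)); rewrite imset_f ?hC //= ipZ_gray => /eqP.
  rewrite ipR_scale; move: h1; case: (ipR x _) => p q.
  rewrite -rmulE /rmul /fZ /= => h1 h2.
  have hp : p = 0 by move: h2; rewrite !mul0r mul1r !add0r.
  by move: h1; rewrite hp add0r => ->.
case/imsetP: hx => v hv ->; rewrite ipZ_gray.
by have := h v; rewrite hv /= => /eqP ->.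
Qed.

Lemma enc_scale n (B : 'M[R4u]_n) c t : scalev c (enc B t) = enc B (scalev c t).
Proof.
apply/ffunP => k; rewrite -(splitK k); case: (split k) => [i|j] /=.
  by rewrite ffunE !enc_l ffunE.
rewrite ffunE !enc_r !ffunE mulr_sumr; apply: eq_bigr => i _.
by rewrite ffunE mulrA.
Qed.

Theorem theorem5p4 (m : nat) (M : 'M[R4u]_m) (alpha beta gamma : R4u) :
  circulant M -> (gamma = beta \/ gamma = ropp beta) ->
  fsdR (codeR (Gmat M alpha beta gamma)) /\
  fsdZ [set gray v | v in codeR (Gmat M alpha beta gamma)].
Proof.
move=> hc hg; have hR := fsdR_part alpha hc hg; split => // w.
have hC : forall v, v \in codeR (Gmat M alpha beta gamma) ->
    scalev (0, 1) v \in codeR (Gmat M alpha beta gamma).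
  rewrite /Gmat codeR_enc => v /imsetP [t _ ->].
  by rewrite enc_scale imset_f ?inE.
transitivity #|[set c in codeR (Gmat M alpha beta gamma) | wtR c == w]|.
  symmetry; apply: (card_wt (f := @gray _)) => //; first exact: can_inj (@grayK _).
  by move=> v; rewrite wt_gray.
rewrite hR; apply: (card_wt (f := fun y => gray (mapt y))).
- by move=> y1 y2 /(can_inj (@grayK _)) /(inv_inj (@maptK _)).
- apply/setP => z; apply/imsetP/idP => [[y hy ->]|hz].
    by rewrite dualZ_gray // grayK maptK.
  by exists (mapt (ginv z)); [rewrite -dualZ_gray | rewrite maptK ginvK].
- by move=> y; rewrite wt_gray wt_mapt.
Qed.
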